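(* Given a Stackelberg game $(G,L,F)$, the problem f-SCE-PA of finding some SCE-PA $\mathbf{x}\in\mathbf{X}^{SCE\text{-}PA}$ can be solved with $|L|+1$ queries to a stability oracle $\mathcal{O}$ for $G$.
   Context: A finite game is $G=(N,\{S_p\}_{p\in N},\{u_p\}_{p\in N})$ with players $N=\{1,\dots,n\}$, finite nonempty strategy sets $S_p$, and utilities $u_p:S\to\mathbb{R}$ on $S=\prod_{p\in N}S_p$; write $s=(s_p,s_{-p})$ with $s_{-p}\in S_{-p}=\prod_{q\neq p}S_q$. $\mathcal{X}=\Delta(S)$ is the set of probability distributions on $S$ and $u_p(x)=\sum_{s\in S}x(s)u_p(s)$ for $x\in\mathcal{X}$. For $P\subseteq N$, $\mathcal{X}^{CE}_P$ is the set of $x\in\mathcal{X}$ such that for every $p\in P$ and all $s_p\neq s_p'\in S_p$: $\sum_{s_{-p}\in S_{-p}} x(s_p,s_{-p})\,(u_p(s_p,s_{-p})-u_p(s_p',s_{-p}))\ge 0$; $\mathcal{X}^{CE}=\mathcal{X}^{CE}_N$ is the set of correlated equilibria of $G$. A Stackelberg game (SG) is a triple $(G,L,F)$ with $L\cup F=N$ and $L\cap F=\emptyset$ (leaders and followers). For $P\subseteq N$, $\Pi_P$ is the set of ordered subsets of $P$ (finite sequences of pairwise distinct elements of $P$, including the empty sequence $\varnothing$); for $\pi\in\Pi_P$ and $p\in P$ not occurring in $\pi$, $\pi p$ is $\pi$ with $p$ appended; when used as a set, $\pi$ means its set of entries. $\mathbf{X}=\prod_{\pi\in\Pi_L}\mathcal{X}^{CE}_{\pi\cup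 F}$, with elements $\mathbf{x}=[x_\pi]_{\pi\in\Pi_L}$. For $\mathbf{x}\in\mathbf{X}$ and $\pi\in\Pi_L$, $x_\pi$ is stable if $u_p(x_\pi)\ge u_p(x_{\pi p})$ for all $p\in L\setminus\pi$; $\mathbf{x}$ is stable if $x_\varnothing$ is stable, and perfectly stable if $x_\pi$ is stable for every $\pi\in\Pi_L$; $\mathbf{X}^{S}$ and $\mathbf{X}^{PS}$ denote the sets of stable and perfectly stable elements of $\mathbf{X}$. For $\mathbf{X}'\subseteq\mathbf{X}$ and $\pi\in\Pi_L$, $\mathcal{P}_{L\setminus\pi}(\mathbf{X}')$ is the set of Pareto optimal elements of $\{x'_\pi:\mathbf{x}'\in\mathbf{X}'\}$ with respect to the objectives $u_p$, $p\in L\setminus\pi$ (an element $y$ of the set is Pareto optimal if no $y'$ in the set satisfies $u_p(y')\ge u_p(y)$ for all $p\in L\setminus\pi$ with strict inequality for some such $p$). $\mathbf{x}\in\mathbf{X}$ is an SCE-PA if $\mathbf{x}\in\mathbf{X}^{PS}$ and $x_\varnothing\in\mathcal{P}_L(\mathbf{X}^{PS})$; $\mathbf{X}^{SCE\text{-}PA}$ is the set of SCE-PAs. A stability oracle $\mathcal{O}(G,c,L^\ast,\{x_p\}_{p\in L'})$ is an algorithm that, given the game $G$, a coefficient vector $c=[c_p]\in[-1,1]^n$, a set $L^\ast\subseteq N$, and distributions $x_p\in\mathcal{X}$ for $p$ in some $L'\subseteq L^\ast$, returns some $x\in\mathcal{X}^{CE}_{N\setminus L^\ast}$ maximizing $\sum_{p\in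 N}\sum_{s\in S}c_pu_p(s)x(s)$ subject to the stability constraints $u_p(x)\ge u_p(x_p)$ for all $p\in L'$. *)

(* Defs.v *)
From HB Require Import structures.
From mathcomp Require Import all_boot all_order all_algebra.
Set Implicit Arguments. Unset Strict Implicit. Unset Printing Implicit Defensive.
Import Order.TTheory GRing.Theory Num.Theory.
Local Open Scope ring_scope.

Definition prof (n : nat) (S : 'I_n -> finType) := {dffun forall p : 'I_n, S p}.

Definition dev (n : nat) (S : 'I_n -> finType) (s : prof S) (p : 'I_n) (b : S p)
  : prof S := [ffun q => dfwith (fun k => s k) b q].

Definition dist (R : realFieldType) (n : nat) (S : 'I_n -> finType) := prof S -> R.

Definition isDist (R : realFieldType) (n : nat) (S : 'I_n -> finType)
  (x : dist R S) : Prop :=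
  (forall s, 0 <= x s) /\ \sum_(s : prof S) x s = 1.

Definition eu (R : realFieldType) (n : nat) (S : 'I_n -> finType)
  (u : 'I_n -> prof S -> R) (p : 'I_n) (x : dist R S) : R :=
  \sum_(s : prof S) x s * u p s.

Definition inCE (R : realFieldType) (n : nat) (S : 'I_n -> finType)
  (u : 'I_n -> prof S -> R) (P : {set 'I_n}) (x : dist R S) : Prop :=
  isDist x /\
  forall p, p \in P -> forall a b : S p, a != b ->
    0 <= \sum_(s : prof S | s p == a) x s * (u p s - u p (dev s b)).

Definition ordSub (n : nat) (L : {set 'I_n}) (pi : seq 'I_n) : Prop :=
  uniq pi /\ {subset pi <= L}.

(* elements of bold X: families indexed by ordered subsets of L
   (values at sequences that are not ordered subsets of L are irrelevant) *)
Definition family (R : realFieldType) (n : nat) (S : 'I_n -> finType) :=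
  seq 'I_n -> dist R S.

Definition inX (R : realFieldType) (n : nat) (S : 'I_n -> finType)
  (u : 'I_n -> prof S -> R) (L : {set 'I_n}) (X : family R S) : Prop :=
  forall pi, ordSub L pi -> inCE u ([set p in pi] :|: ~: L) (X pi).

Definition stableAt (R : realFieldType) (n : nat) (S : 'I_n -> finType)
  (u : 'I_n -> prof S -> R) (L : {set 'I_n}) (X : family R S) (pi : seq 'I_n)
  : Prop :=
  forall p, p \in L -> p \notin pi -> eu u p (X (rcons pi p)) <= eu u p (X pi).

Definition perfectlyStable (R : realFieldType) (n : nat) (S : 'I_n -> finType)
  (u : 'I_n -> prof S -> R) (L : {set 'I_n}) (X : family R S) : Prop :=
  inX u L X /\ forall pi, ordSub L pi -> stableAt u L X pi.

Definition SCE_PA (R : realFieldType) (n : nat) (S : 'I_n -> finType)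
  (u : 'I_n -> prof S -> R) (L : {set 'I_n}) (X : family R S) : Prop :=
  perfectlyStable u L X /\
  ~ (exists X' : family R S, perfectlyStable u L X' /\
       (forall p, p \in L -> eu u p (X [::]) <= eu u p (X' [::])) /\
       (exists p, p \in L /\ eu u p (X [::]) < eu u p (X' [::]))).

Definition oracleFeasible (R : realFieldType) (n : nat) (S : 'I_n -> finType)
  (u : 'I_n -> prof S -> R) (Ls Lp : {set 'I_n}) (xs : 'I_n -> dist R S)
  (x : dist R S) : Prop :=
  inCE u (~: Ls) x /\ forall p, p \in Lp -> eu u p (xs p) <= eu u p x.

Definition oracleObj (R : realFieldType) (n : nat) (S : 'I_n -> finType)
  (u : 'I_n -> prof S -> R) (c : 'I_n -> R) (x : dist R S) : R :=
  \sum_(p : 'I_n) \sum_(s : prof S) c p * u p s * x s.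

Definition oracle (R : realFieldType) (n : nat) (S : 'I_n -> finType) :=
  ('I_n -> R) -> {set 'I_n} -> {set 'I_n} -> ('I_n -> dist R S) -> dist R S.

Definition stabilityOracle (R : realFieldType) (n : nat) (S : 'I_n -> finType)
  (u : 'I_n -> prof S -> R) (O : oracle R S) : Prop :=
  forall (c : 'I_n -> R) (Ls Lp : {set 'I_n}) (xs : 'I_n -> dist R S),
    (forall p, -1 <= c p <= 1) -> Lp \subset Ls ->
    (forall p, p \in Lp -> isDist (xs p)) ->
    (exists x, oracleFeasible u Ls Lp xs x) ->
    oracleFeasible u Ls Lp xs (O c Ls Lp xs) /\
    forall y, oracleFeasible u Ls Lp xs y ->
      oracleObj u c y <= oracleObj u c (O c Ls Lp xs).

(* A query issued by the algorithm: coefficients c, sets L*, L', and for each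
   player p an index into the list of previous oracle answers, designating x_p. *)
Record query (R : realFieldType) (n : nat) := Query {
  q_c : 'I_n -> R;
  q_Ls : {set 'I_n};
  q_Lp : {set 'I_n};
  q_xs : 'I_n -> nat }.

(* An oracle algorithm: [alg_step a] is the next query, given the list [a] of
   previous answers; [alg_out a pi] is the index (into the final list of answers)
   of the answer output as the component x_pi. *)
Record oracleAlg (R : realFieldType) (n : nat) (S : 'I_n -> finType) := OracleAlg {
  alg_step : seq (dist R S) -> query R n;
  alg_out : seq (dist R S) -> seq 'I_n -> nat }.

Definition dist0 (R : realFieldType) (n : nat) (S : 'I_n -> finType) : dist R S :=
  fun _ => 0.

Definition ask (R : realFieldType) (n : nat) (S : 'I_n -> finType)
  (O : oracle R S) (a : seq (dist R S)) (q : query R n) : dist R S :=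
  O (q_c q) (q_Ls q) (q_Lp q) (fun p => nth (@dist0 R n S) a (q_xs q p)).

Fixpoint runAlg (R : realFieldType) (n : nat) (S : 'I_n -> finType)
  (A : oracleAlg R S) (O : oracle R S) (k : nat) : seq (dist R S) :=
  match k with
  | 0 => [::]
  | k'.+1 => let a := runAlg A O k' in rcons a (ask O a (alg_step A a))
  end.

Definition legalAlg (R : realFieldType) (n : nat) (S : 'I_n -> finType)
  (A : oracleAlg R S) (k : nat) : Prop :=
  (forall a : seq (dist R S), (size a < k)%N ->
     let q := alg_step A a in
     (forall p, -1 <= q_c q p <= 1) /\ q_Lp q \subset q_Ls q /\
     (forall p, p \in q_Lp q -> (q_xs q p < size a)%N)) /\
  (forall a : seq (dist R S), size a = k -> forall pi, (alg_out A a pi < k)%N).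

Definition algOutput (R : realFieldType) (n : nat) (S : 'I_n -> finType)
  (A : oracleAlg R S) (O : oracle R S) (k : nat) : family R S :=
  let a := runAlg A O k in fun pi => nth (@dist0 R n S) a (alg_out A a pi).

(* Main.v *)
Require Import Defs.
From HB Require Import structures.
From mathcomp Require Import all_boot all_order all_algebra.
Import Order.TTheory GRing.Theory Num.Theory.
Local Open Scope ring_scope.
From mathcomp Require Import ring lra.
Set Implicit Arguments. Unset Strict Implicit. Unset Printing Implicit Defensive.

Section Gordan.
Variables (R : realFieldType) (J : eqType).

Definition G2 (I : finType) (a : I -> R) (f : I -> R) (r : (I + I * I)%type) : R :=
  match r with
  | inl i => if a i <= 0 then f i else 0
  | inr pq => if (0 < a pq.1) && (a pq.2 < 0) then a pq.1 * f pq.2 - a pq.2 * f pq.1 else 0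
  end.

Definition yback (I : finType) (a : I -> R) (y2 : (I + I * I)%type -> R) (i : I) : R :=
  (if a i <= 0 then y2 (inl i) else 0)
  + \sum_p (if (0 < a p) && (a i < 0) then a p * y2 (inr (p, i)) else 0)
  + \sum_q (if (0 < a i) && (a q < 0) then - a q * y2 (inr (i, q)) else 0).

Lemma yback_eq (I : finType) (a : I -> R) y2 (f : I -> R) :
  \sum_i yback a y2 i * f i = \sum_r y2 r * G2 a f r.
Proof.
rewrite big_sumType /=.
have E3 : \sum_(pq : I * I) y2 (inr pq) * G2 a f (inr pq) =
  \sum_p \sum_q y2 (inr (p, q)) * G2 a f (inr (p, q)).
  by rewrite pair_bigA; apply: eq_bigr => -[p q].
rewrite E3.
under eq_bigr do rewrite /yback !mulrDl.
rewrite !big_split /=; rewrite -addrA; congr (_ + _).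
  by apply: eq_bigr => i _; case: ifP => _; rewrite ?mul0r ?mulr0.
have E1 : \sum_i (\sum_p (if (0 < a p) && (a i < 0) then a p * y2 (inr (p, i)) else 0)) * f i
   = \sum_p \sum_q (if (0 < a p) && (a q < 0) then a p * y2 (inr (p, q)) * f q else 0).
  rewrite exchange_big /=; apply: eq_bigr => p _; rewrite big_distrl /=.
  apply: eq_bigr => q _; case: ifP => _; by rewrite ?mul0r.
have E2 : \sum_i (\sum_q (if (0 < a i) && (a q < 0) then - a q * y2 (inr (i, q)) else 0)) * f i
   = \sum_p \sum_q (if (0 < a p) && (a q < 0) then - a q * y2 (inr (p, q)) * f p else 0).
  apply: eq_bigr => p _; rewrite big_distrl /=.
  apply: eq_bigr => q _; case: ifP => _; by rewrite ?mul0r.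
rewrite E1 E2 -big_split /=; apply: eq_bigr => p _; rewrite -big_split /=.
apply: eq_bigr => q _; case: ifP => _ /=; last by rewrite addr0 mulr0.
ring.
Qed.

Lemma gordan (js : seq J) : uniq js -> forall (I : finType) (M : I -> J -> R),
  (exists v : J -> R, (forall j, 0 <= v j) /\ (exists2 j, j \in js & 0 < v j) /\
      forall i, 0 <= \sum_(j <- js) M i j * v j)
  \/ (exists y : I -> R, (forall i, 0 <= y i) /\
      forall j, j \in js -> \sum_i y i * M i j < 0).
Proof.
elim: js => [|j0 js IH] /=.
  move=> _ I M; right; exists (fun _ => 0); split=> // j; by rewrite in_nil.
case/andP=> j0js ujs I M.
pose a i := M i j0.
have [allpos|] := boolP [forall i, 0 <= a i].
  left; exists (fun j => (j == j0)%:R); split; first by move=> j; exact: ler0n.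
  split; first by exists j0; rewrite ?mem_head ?eqxx ?ltr01.
  move=> i; rewrite big_cons eqxx mulr1 big1_seq ?addr0.
    by move/forallP: allpos => /(_ i).
  move=> j /andP[_ jin]; have -> : (j == j0) = false.
    by apply/negbTE; apply: contraNneq j0js => <-.
  by rewrite mulr0.
rewrite negb_forall => /existsP[n0]; rewrite -ltNge => an0.
case: (IH ujs _ (fun r j => G2 a (fun i => M i j) r)).
- move=> [w [w0 [[j1 j1in wj1] Hw]]].
  pose b i := \sum_(j <- js) M i j * w j.
  have Hinl i : a i <= 0 -> 0 <= b i.
    move=> ai.
    have E : \sum_(j <- js) G2 a (fun i => M i j) (inl i) * w j = b i.
      by apply: eq_bigr => j _; rewrite /= ai.
    by rewrite -E; exact: Hw.
  have Hinr p q : 0 < a p -> a q < 0 -> 0 <= a p * b q - a q * b p.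
    move=> ap aq.
    have E : \sum_(j <- js) G2 a (fun i => M i j) (inr (p, q)) * w j = a p * b q - a q * b p.
      rewrite /b !big_distrr -sumrB /=; apply: eq_bigr => j _; rewrite ap aq /=; ring.
    by rewrite -E; exact: Hw.
  pose t := \big[Order.max/0]_(i | 0 < a i) (- b i / a i).
  have t0 : 0 <= t by apply: bigmax_ge_id.
  left; exists (fun j => if j == j0 then t else w j); split.
    by move=> j; case: ifP.
  split.
    exists j1; first by rewrite inE j1in orbT.
    have -> : (j1 == j0) = false by apply/negbTE; apply: contraNneq j0js => <-.
    done.
  move=> i; rewrite big_cons eqxx.
  rewrite (eq_big_seq (fun j => M i j * w j)); last first.
    move=> j jin; have -> : (j == j0) = false.
      by apply/negbTE; apply: contraNneq j0js => <-.
    done.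
  rewrite -/(b i) -/(a i).
  have [ai|ai|ai] := ltgtP (a i) 0.
  + have bi := Hinl i (ltW ai).
    pose c := b i / (- a i).
    have na : 0 < - a i by rewrite oppr_gt0.
    have tc : t <= c.
      apply: bigmax_le; first by apply: divr_ge0 => //; exact: ltW.
      move=> p ap; rewrite /c ler_pdivrMr // mulrAC ler_pdivlMr //.
      have := Hinr p i ap ai; lra.
    have : a i * c = - b i.
      rewrite /c; field; by rewrite ?oppr_eq0 lt_eqF.
    move=> Hac; have : a i * c <= a i * t by rewrite ler_nM2l.
    lra.
  + have tb : - b i / a i <= t by apply: (@le_bigmax_cond _ _ _ _ i (fun i => 0 < a i)).
    have : a i * (- b i / a i) = - b i.
      field; by rewrite gt_eqF.
    move=> Hab; have : a i * (- b i / a i) <= a i * t by rewrite ler_pM2l.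
    lra.
  + by rewrite ai mul0r add0r Hinl // ai.
- move=> [y2 [y20 Hy2]].
  pose y := yback a y2.
  have y0 i : 0 <= y i.
    rewrite /y /yback; apply: addr_ge0; first apply: addr_ge0.
    + by case: ifP.
    + apply: sumr_ge0 => p _; case: ifP => // /andP[ap _]; apply: mulr_ge0 => //; exact: ltW.
    + apply: sumr_ge0 => q _; case: ifP => // /andP[_ aq]; apply: mulr_ge0 => //.
      by rewrite oppr_ge0 ltW.
  pose d j := \sum_i y i * M i j.
  have dneg j : j \in js -> d j < 0.
    move=> jin; rewrite /d /y yback_eq; exact: Hy2.
  have d0 : d j0 <= 0.
    rewrite /d /y yback_eq big_sumType /= [X in _ + X]big1 ?addr0; last first.
      move=> [p q] _ /=; case: ifP => _; last by rewrite mulr0.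
      by rewrite /a [X in _ - X]mulrC subrr mulr0.
    apply: sumr_le0 => i _; case: ifP => ai; last by rewrite mulr0.
    by apply: mulr_ge0_le0.
  pose c := 1 + \sum_(j <- js) `|M n0 j| / (- d j).
  have T0 j : j \in js -> 0 <= `|M n0 j| / (- d j).
    move=> jin; apply: divr_ge0 => //; rewrite oppr_ge0 ltW //; exact: dneg.
  have c1 : 1 <= c.
    rewrite /c lerDl big_seq; apply: sumr_ge0 => j jin; exact: T0.
  have c0 : 0 <= c by apply: le_trans c1; exact: ler01.
  right; exists (fun i => c * y i + (i == n0)%:R); split.
    by move=> i; apply: addr_ge0; [apply: mulr_ge0 | exact: ler0n].
  have key j : \sum_i (c * y i + (i == n0)%:R) * M i j = c * d j + M n0 j.
    under eq_bigr do rewrite mulrDl -mulrA.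
    rewrite big_split /= -big_distrr /=; congr (_ + _).
    rewrite (bigD1 n0) //= eqxx mul1r big1 ?addr0 // => i /negbTE ->.
    by rewrite mul0r.
  move=> j; rewrite inE key => /orP[/eqP -> | jin].
    have : c * d j0 <= 0 by apply: mulr_ge0_le0.
    rewrite -/(a n0); lra.
  have dj := dneg j jin.
  have Tc : 1 + `|M n0 j| / (- d j) <= c.
    rewrite /c lerD2l (big_rem j jin) /= lerDl big_seq; apply: sumr_ge0 => k kin.
    apply: T0; exact: mem_rem kin.
  have H1 : c * d j <= (1 + `|M n0 j| / (- d j)) * d j by apply: ler_wnM2r => //; exact: ltW.
  have H2 : (1 + `|M n0 j| / (- d j)) * d j = d j - `|M n0 j|.
    field; by rewrite ?oppr_eq0 lt_eqF.
  have H3 : M n0 j <= `|M n0 j| by exact: ler_norm.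
  lra.
Qed.
End Gordan.
Lemma sum_ind (R : realFieldType) (T : finType) (a : T) (X : R) :
  \sum_c (a == c)%:R * X = X.
Proof.
rewrite (bigD1 a) //= eqxx mul1r big1 ?addr0 // => c /negbTE.
by rewrite eq_sym => ->; rewrite mul0r.
Qed.

Lemma stationary (R : realFieldType) (T : finType) (t0 : T) (W : T -> T -> R) :
  (forall a b, 0 <= W a b) ->
  exists pi : T -> R, (forall a, 0 <= pi a) /\ (exists a, 0 < pi a) /\
    forall c, pi c * \sum_b W c b = \sum_a pi a * W a c.
Proof.
move=> W0.
case: (gordan (index_enum_uniq T) (fun c a => (a == c)%:R * \sum_b W a b - W a c)).
- move=> [v [v0 [[a _ va] Hv]]].
  exists v; split=> //; split; first by exists a.
  pose g c := \sum_a ((a == c)%:R * \sum_b W a b - W a c) * v a.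
  have gsum : \sum_c g c = 0.
    rewrite /g exchange_big /=; apply: big1 => a' _.
    rewrite -big_distrl /= sumrB sum_ind subrr mul0r //.
  have g0 := psumr_eq0P (fun c _ => Hv c) gsum.
  move=> c; have := g0 c isT; rewrite /g.
  under eq_bigr do rewrite mulrBl.
  rewrite sumrB [X in X - _](bigD1 c) //= eqxx mul1r [X in _ + X - _]big1 ?addr0; last first.
    by move=> a' ne; rewrite (negbTE ne) !mul0r.
  move/eqP; rewrite subr_eq0 => /eqP E.
  by rewrite mulrC E; apply: eq_bigr => a' _; rewrite mulrC.
- move=> [y [y0 Hy]].
  case: (@arg_maxP _ R T t0 xpredT y isT) => a _ amax.
  have := Hy a (mem_index_enum a).
  have -> : \sum_c y c * ((a == c)%:R * \sum_b W a b - W a c)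
          = \sum_c W a c * (y a - y c).
    under eq_bigr do rewrite mulrBr.
    rewrite sumrB.
    have -> : \sum_c y c * ((a == c)%:R * \sum_b W a b) = y a * \sum_b W a b.
      rewrite [LHS](bigD1 a) //= eqxx mul1r [X in _ + X]big1 ?addr0 // => c /negbTE.
      by rewrite eq_sym => ->; rewrite mul0r mulr0.
    rewrite big_distrr -sumrB /=; apply: eq_bigr => c _; ring.
  rewrite ltNge => /negP; case; apply: sumr_ge0 => c _.
  apply: mulr_ge0 => //; rewrite subr_ge0; exact: amax.
Qed.
Section CE.
Variables (R : realFieldType) (n : nat) (S : 'I_n -> finType) (u : 'I_n -> prof S -> R).

Lemma dev_at (s : prof S) p (b : S p) : dev s b p = b.
Proof. by rewrite ffunE dfwith_in. Qed.

Lemma dev_out (s : prof S) p (b : S p) q : p != q -> dev s b q = s q.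
Proof. by move=> ne; rewrite ffunE dfwith_out. Qed.

Lemma dev_dev (s : prof S) p (b c : S p) : dev (dev s b) c = dev s c.
Proof.
apply/ffunP => q; rewrite !ffunE; case: (eqVneq p q) => [<-|ne].
  by rewrite !dfwith_in.
by rewrite !dfwith_out // dev_out.
Qed.

Lemma dev_id (s : prof S) p : dev s (s p) = s.
Proof.
apply/ffunP => q; rewrite !ffunE; case: (eqVneq p q) => [<-|ne].
  by rewrite !dfwith_in.
by rewrite !dfwith_out.
Qed.

Lemma dev_eqs (s : prof S) p (a : S p) : (dev s a == s) = (s p == a).
Proof.
apply/eqP/eqP => [<-|<-]; first by rewrite dev_at.
exact: dev_id.
Qed.

Lemma reindex_dev p (a b : S p) (g : prof S -> R) :
  \sum_(s : prof S | s p == a) g (dev s b) = \sum_(t : prof S | t p == b) g t.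
Proof.
rewrite [RHS](reindex_onto (fun s : prof S => dev s b) (fun t => dev t a)); last first.
  by move=> t /eqP tb; rewrite dev_dev -tb dev_id.
apply: eq_bigl => s; rewrite dev_at eqxx /= dev_dev dev_eqs //.
Qed.

Definition SS (p : 'I_n) : finType := (S p * S p)%type.
Definition Row := {p : 'I_n & SS p}.
Definition Mce (r : Row) (s : prof S) : R :=
  (s (tag r) == (tagged r).1)%:R * (u (tag r) s - u (tag r) (dev s (tagged r).2)).


Section Prod.
Variable pi : forall p : 'I_n, S p -> R.
Definition wprod (s : prof S) : R := \prod_(p : 'I_n) pi (s p).
Definition rp (p : 'I_n) (s : prof S) : R := \prod_(q | q != p) pi (s q).
Definition Gp (p : 'I_n) (c : S p) : R := \sum_(t : prof S | t p == c) rp p t * u p t.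

Lemma wprod_split p s : wprod s = pi (s p) * rp p s.
Proof. by rewrite /wprod (bigD1 p). Qed.

Lemma rp_dev p s (b : S p) : rp p (dev s b) = rp p s.
Proof. by apply: eq_bigr => q qp; rewrite dev_out // eq_sym. Qed.

Lemma claimA p (a b : S p) :
  \sum_(s : prof S) Mce (Tagged SS (a, b)) s * wprod s = pi a * (Gp a - Gp b).
Proof.
rewrite /Mce /=.
have -> : \sum_(s : prof S) (s p == a)%:R * (u p s - u p (dev s b)) * wprod s =
   \sum_(s : prof S | s p == a) pi a * (rp p s * u p s - rp p (dev s b) * u p (dev s b)).
  rewrite [RHS]big_mkcond /=; apply: eq_bigr => s _.
  case: eqP => [sa|_]; last by rewrite !mul0r.
  rewrite mul1r (wprod_split p) rp_dev sa; ring.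
rewrite -big_distrr /= sumrB /Gp; congr (_ * (_ - _)).
exact: (reindex_dev a b (fun t => rp p t * u p t)).
Qed.

Lemma claimB p (W : S p -> S p -> R)
  (Hst : forall c, pi c * \sum_b W c b = \sum_a pi a * W a c) :
  \sum_(ab : SS p) W ab.1 ab.2 * \sum_(s : prof S) Mce (Tagged SS ab) s * wprod s = 0.
Proof.
have -> : \sum_(ab : SS p) W ab.1 ab.2 * \sum_(s : prof S) Mce (Tagged SS ab) s * wprod s
   = \sum_(a : S p) \sum_(b : S p) W a b * (pi a * (Gp a - Gp b)).
  rewrite [RHS]pair_bigA; apply: eq_bigr => -[a b] _ /=; by rewrite claimA.
have -> : \sum_(a : S p) \sum_(b : S p) W a b * (pi a * (Gp a - Gp b)) =
  (\sum_(a : S p) \sum_(b : S p) pi a * W a b * Gp a) - \sum_(a : S p) \sum_(b : S p) pi a * W a b * Gp b.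
  rewrite -sumrB; apply: eq_bigr => a _; rewrite -sumrB; apply: eq_bigr => b _; ring.
rewrite [X in _ - X]exchange_big /=.
have -> : \sum_(a : S p) \sum_(b : S p) pi a * W a b * Gp a = \sum_(a : S p) (pi a * \sum_b W a b) * Gp a.
  by apply: eq_bigr => a _; rewrite -big_distrl -big_distrr.
have -> : \sum_(b : S p) \sum_(a : S p) pi a * W a b * Gp b = \sum_(b : S p) (pi b * \sum_a W b a) * Gp b.
  by apply: eq_bigr => b _; rewrite -big_distrl /= Hst.
by rewrite subrr.
Qed.
End Prod.

Lemma ce_exists : (forall p : 'I_n, 0 < #|S p|)%N ->
  exists x : dist R S, inCE u [set: 'I_n] x.
Proof.
move=> HS.
case: (gordan (index_enum_uniq (prof S)) Mce).
- move=> [v [v0 [[s1 _ vs1] Hv]]].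
  pose V := \sum_(s : prof S) v s.
  have V0 : 0 < V.
    rewrite /V (bigD1 s1) //=; apply: ltr_pwDl => //; exact: sumr_ge0.
  exists (fun s => v s / V); split; first split.
  + by move=> s; apply: divr_ge0 => //; exact: ltW.
  + by rewrite -mulr_suml divff // gt_eqF.
  move=> p _ a b _.
  have := Hv (Tagged SS (a, b)).
  have -> : \sum_(j <- index_enum (prof S)) Mce (Tagged SS (a, b)) j * v j =
     V * \sum_(s : prof S | s p == a) v s / V * (u p s - u p (dev s b)).
    rewrite big_distrr /= [RHS]big_mkcond /=; apply: eq_bigr => s _.
    rewrite /Mce /=; case: eqP => _; last by rewrite !mul0r.
    by rewrite mul1r; field; rewrite gt_eqF.
  by rewrite pmulr_rge0.
- move=> [y [y0 Hy]]; exfalso.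
  pose W p (a b : S p) := y (Tagged SS (a, b)).
  have : forall p, exists pi0 : S p -> R, (forall a, 0 <= pi0 a) /\ (exists a, 0 < pi0 a) /\
       forall c, pi0 c * \sum_b W p c b = \sum_a pi0 a * W p a c.
    move=> p; case/card_gt0P: (HS p) => t0 _; apply: (stationary t0) => a b; exact: y0.
  case/fin_all_exists => pi Hpi.
  have : forall p, exists c : S p, 0 < pi p c.
    by move=> p; have [_ [[c ?] _]] := Hpi p; exists c.
  case/fin_all_exists => c Hc.
  pose s0 : prof S := finfun c.
  pose w := wprod pi.
  have w0 s : 0 <= w s.
    by apply: prodr_ge0 => p _; have [H _] := Hpi p; exact: H.
  have ws0 : 0 < w s0.
    by apply: prodr_gt0 => p _; rewrite /s0 ffunE; exact: Hc.
  pose d s := \sum_r y r * Mce r s.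
  have neg : \sum_(s : prof S) w s * d s < 0.
    rewrite (bigD1 s0) //=.
    have h1 : w s0 * d s0 < 0 by rewrite pmulr_rlt0 //; exact: Hy (mem_index_enum _).
    have h2 : \sum_(s | s != s0) w s * d s <= 0.
      apply: sumr_le0 => s _; apply: mulr_ge0_le0 => //; exact: ltW (Hy _ (mem_index_enum _)).
    lra.
  have zero : \sum_(s : prof S) w s * d s = 0.
    have -> : \sum_(s : prof S) w s * d s = \sum_(r : Row) y r * \sum_(s : prof S) Mce r s * w s.
      rewrite /d; under eq_bigr do rewrite big_distrr /=.
      rewrite exchange_big /=; apply: eq_bigr => r _; rewrite big_distrr /=.
      by apply: eq_bigr => s _; ring.
    have -> : \sum_(r : Row) y r * \sum_(s : prof S) Mce r s * w s =
       \sum_(p : 'I_n) \sum_(ab : SS p) W p ab.1 ab.2 * \sum_(s : prof S) Mce (Tagged SS ab) s * w s.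
      rewrite (@sig_big_dep _ _ _ _ _ xpredT (fun _ => xpredT)
                 (fun i (j : SS i) => W i j.1 j.2 * \sum_(s : prof S) Mce (Tagged SS j) s * w s)).
      by apply: eq_big => [[i j]|[i [a b]] _] //.
    apply: big1 => p _; apply: claimB.
    by have [_ [_ H]] := Hpi p.
  lra.
Qed.

End CE.
Lemma inCE_mono (R : realFieldType) (n : nat) (S : 'I_n -> finType)
  (u : 'I_n -> prof S -> R) (P Q : {set 'I_n}) x :
  inCE u P x -> Q \subset P -> inCE u Q x.
Proof.
move=> [dx H] sub; split=> // p pQ; apply: H; exact: (subsetP sub).
Qed.

Lemma size_run (R : realFieldType) (n : nat) (S : 'I_n -> finType)
  (A : oracleAlg R S) O k : size (runAlg A O k) = k.
Proof. by elim: k => //= k IH; rewrite size_rcons IH. Qed.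

Lemma nth_run (R : realFieldType) (n : nat) (S : 'I_n -> finType)
  (A : oracleAlg R S) O i k : (i < k)%N ->
  nth (@dist0 R n S) (runAlg A O k) i =
  ask O (runAlg A O i) (alg_step A (runAlg A O i)).
Proof.
elim: k => // k IH; rewrite ltnS leq_eqVlt => /orP[/eqP ->|lt].
  by rewrite /= nth_rcons size_run ltnn eqxx.
by rewrite /= nth_rcons size_run lt IH.
Qed.

Lemma obj_eq (R : realFieldType) (n : nat) (S : 'I_n -> finType)
  (u : 'I_n -> prof S -> R) (L : {set 'I_n}) y :
  oracleObj u (fun p => (p \in L)%:R) y = \sum_(p in L) eu u p y.
Proof.
rewrite /oracleObj [RHS]big_mkcond /=; apply: eq_bigr => p _.
case: (p \in L); last by apply: big1 => s _; rewrite !mul0r.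
by apply: eq_bigr => s _; rewrite mul1r mulrC.
Qed.

Lemma cbound (R : realFieldType) (b : bool) : -1 <= (b%:R : R) <= 1.
Proof.
case: b; apply/andP; split => /=; rewrite ?lexx //; try exact: lerN10; try exact: ler01.
by apply: le_trans (lerN10 _) _.
Qed.

Lemma cbound0 (R : realFieldType) : -1 <= (0 : R) <= 1.
Proof. by apply/andP; split; [exact: lerN10 | exact: ler01]. Qed.

Unset Implicit Arguments.
Theorem theorem4 (R : realFieldType) (n : nat) (S : 'I_n -> finType)
  (u : 'I_n -> prof S -> R) (L : {set 'I_n})
  (HS : forall p : 'I_n, (0 < #|S p|)%N) :
  exists A : oracleAlg R S,
    legalAlg A #|L|.+1 /\
    forall O : oracle R S, stabilityOracle u O ->
      SCE_PA u L (algOutput A O #|L|.+1).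
Proof.
pose K := #|L|.
pose q0 : query R n := Query (fun _ => 0) set0 set0 (fun _ => 0%N).
pose qf : query R n := Query (fun p => (p \in L)%:R) L L (fun _ => 0%N).
pose A : oracleAlg R S := OracleAlg (fun a => if size a == K then qf else q0)
   (fun a pi => if pi == [::] then K else 0%N).
have [e eCE] := ce_exists u HS.
exists A; split.
  split.
    move=> a Ha /=; case: eqP => [Ka|_] /=.
      split; first by move=> p; exact: cbound.
      split=> // p pL; rewrite Ka; apply/card_gt0P; by exists p.
    by split; [move=> p; exact: cbound0 | rewrite sub0set; split=> // p; rewrite inE].
  by move=> a _ pi /=; case: ifP.
move=> O HO.
pose d := @dist0 R n S.
pose a := runAlg A O K.+1.
pose m := nth d a 0.
pose z := nth d a K.
have mCE : inCE u [set: 'I_n] m.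
  rewrite /m /a nth_run // /= /ask /=.
  case: eqP => [K0|_] /=.
    have L0 : L = set0 by apply/eqP; rewrite -cards_eq0 -/K -K0.
    have [H _] := HO (fun p => (p \in L)%:R) L L (fun p => nth d [::] 0%N)
      ltac:(by move=> p; exact: cbound) (subxx _)
      ltac:(by move=> p; rewrite L0 inE) ltac:(by exists e; split; [apply: inCE_mono eCE _; exact: subsetT | move=> p; rewrite L0 inE]).
    case: H => H _; apply: inCE_mono H _; by rewrite L0 setC0.
  have [H _] := HO (fun _ => 0) set0 set0 (fun p => nth d [::] 0%N)
      ltac:(by move=> p; exact: cbound0) (subxx _)
      ltac:(by move=> p; rewrite inE) ltac:(by exists e; split; [apply: inCE_mono eCE _; exact: subsetT | move=> p; rewrite inE]).
  case: H => H _; apply: inCE_mono H _; by rewrite setC0.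
have zq : z = O (fun p => (p \in L)%:R) L L (fun _ => nth d (runAlg A O K) 0%N).
  by rewrite /z /a nth_run // /ask /= size_run eqxx.
have xsm : (0 < K)%N -> nth d (runAlg A O K) 0%N = m.
  by move=> K0; rewrite /m /a !nth_run.
have [zF zopt] : oracleFeasible u L L (fun _ => nth d (runAlg A O K) 0%N) z /\
   forall y, oracleFeasible u L L (fun _ => nth d (runAlg A O K) 0%N) y ->
     oracleObj u (fun p => (p \in L)%:R) y <= oracleObj u (fun p => (p \in L)%:R) z.
  rewrite zq; apply: HO.
  - by move=> p; exact: cbound.
  - exact: subxx.
  - move=> p pL; rewrite xsm; first by case: mCE.
    by apply/card_gt0P; exists p.
  - have [K0|Kpos] := posnP K.
      have L0 : L = set0 by apply/eqP; rewrite -cards_eq0 -/K K0.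
      by exists e; split; [apply: inCE_mono eCE _; exact: subsetT | move=> p; rewrite L0 inE].
    exists m; split; first by apply: inCE_mono mCE _; exact: subsetT.
    by move=> p _; rewrite xsm.
have Xdef pi : algOutput A O K.+1 pi = if pi == [::] then z else m.
  rewrite /algOutput /z /m /a.
  change (alg_out A (runAlg A O K.+1) pi) with (if pi == [::] then K else 0%N).
  by case: (pi == [::]).
have zm p : p \in L -> eu u p m <= eu u p z.
  move=> pL; have [_ H] := zF; have := H p pL; rewrite xsm //.
  by apply/card_gt0P; exists p.
have PS : perfectlyStable u L (algOutput A O K.+1).
  split.
    move=> pi _; rewrite Xdef; case: eqP => [->|_].
      by case: zF => H _; apply: inCE_mono H _; apply/subsetP => p; rewrite !inE.
    by apply: inCE_mono mCE _; exact: subsetT.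
  move=> pi _ p pL _; rewrite !Xdef.
  have -> : (rcons pi p == [::]) = false by case: pi.
  case: eqP => _; [exact: zm | exact: lexx].
split=> //.
move=> [X' [[inX' _] [ge [p0 [p0L lt]]]]].
have X'F : oracleFeasible u L L (fun _ => nth d (runAlg A O K) 0%N) (X' [::]).
  split.
    have os : ordSub L [::] by split => // x; rewrite in_nil.
    have H := inX' [::] os; apply: inCE_mono H _; apply/subsetP => p; rewrite !inE //.
  move=> p pL; rewrite xsm; last by apply/card_gt0P; exists p.
  apply: le_trans (zm p pL) _; have := ge p pL; by rewrite Xdef eqxx.
have := zopt _ X'F; rewrite !obj_eq.
rewrite Xdef eqxx in ge lt.
rewrite (bigD1 p0) //= [X in _ <= X](bigD1 p0) //=.
have : \sum_(i in L | i != p0) eu u i (X' [::]) >= \sum_(i in L | i != p0) eu u i z.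
  by apply: ler_sum => i /andP[iL _]; apply: ge.
lra.
Qed.
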